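(* Let $N=2J$ with $J\ge 1$ an integer. For real numbers $\gamma_1,\dots,\gamma_{N-2}$ satisfying $\gamma_n=\gamma_{N-1-n}$ for all $n$, let $H=H(\gamma)$ be the real $N\times N$ matrix with entries $$H_{n,n}=2n-1-N\ (1\le n\le N),\qquad H_{n,n+2}=\gamma_n,\quad H_{n+2,n}=-\gamma_n\ (1\le n\le N-2),$$ and all other entries zero. Then: (a) The span of the odd-indexed standard basis vectors $e_1,e_3,\dots,e_{2J-1}$ and the span of the even-indexed ones $e_2,e_4,\dots,e_{2J}$ are both invariant under $H$, so $H$ is permutation-similar to $A\oplus B$, where $A$ is the $J\times J$ tridiagonal matrix with diagonal $(1-2J,5-2J,\dots,2J-3)$, superdiagonal $(\gamma_1,\gamma_3,\dots,\gamma_{2J-3})$ and subdiagonal $(-\gamma_1,-\gamma_3,\dots,-\gamma_{2J-3})$, and $B$ is the $J\times J$ tridiagonal matrix with diagonal $(3-2J,7-2J,\dots,2J-1)$, superdiagonal $(\gamma_2,\gamma_4,\dots,\gamma_{2J-2})$ and subdiagonal the negatives of these. (b) If all eigenvalues of $A$ coincide, their common value is $\eta=-1$; if all eigenvalues of $B$ coincide, their common value is $\eta=+1$. Consequently, for no real choice of the $\gamma_n$ does $H$ have a single eigenvalue of algebraic multiplicity $N$. (c) For the choice $\gamma_{2k-1}=\gamma_{2k}=2\sqrt{k(J-k)}$, $k=1,\dots,J-1$ (which satisfies $\gamma_n=\gamma_{N-1-n}$), one has $A=-I_J+2T_J$ and $B=I_J+2T_J$; thus $A$ has the single eigenvalue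 $-1$ and $B$ the single eigenvalue $+1$, each with a single Jordan block of size $J$ (geometric multiplicity one).
   Context: For an integer $M\ge1$, $T_M$ denotes the real $M\times M$ tridiagonal matrix with $(T_M)_{k,k}=2k-1-M$ for $1\le k\le M$, $(T_M)_{k,k+1}=\sqrt{k(M-k)}$ and $(T_M)_{k+1,k}=-\sqrt{k(M-k)}$ for $1\le k\le M-1$, all other entries zero (so $T_1=[0]$, $T_2=\begin{pmatrix}-1&1\\-1&1\end{pmatrix}$, $T_3=\begin{pmatrix}-2&\sqrt2&0\\-\sqrt2&0&\sqrt2\\0&-\sqrt2&2\end{pmatrix}$). It is used that $T_M$ is nilpotent with a single Jordan block of size $M$ (the exceptional-point limit of the tridiagonal toy Hamiltonian of dimension $M$). *)

(* Defs.v *)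
From HB Require Import structures.
From mathcomp Require Import all_boot all_order all_algebra.
From mathcomp Require Import fingroup perm complex.
Set Implicit Arguments. Unset Strict Implicit. Unset Printing Implicit Defensive.
Import Order.TTheory GRing.Theory Num.Theory.
Local Open Scope ring_scope.

(* All matrices are indexed from 0; paper index n corresponds to i = n - 1. *)

Definition Tmat (R : rcfType) (M : nat) : 'M[R]_M :=
  \matrix_(i < M, j < M)
    if i == j :> nat then (2 * i + 1)%:R - M%:R
    else if j == i.+1 :> nat then Num.sqrt ((i.+1 * (M - i.+1))%:R)
    else if i == j.+1 :> nat then - Num.sqrt ((j.+1 * (M - j.+1))%:R)
    else 0.

(* H(gamma), N = 2J, gamma : nat -> R (only gamma 1 .. gamma (N-2) are used) *)
Definition Hmat (R : rcfType) (J : nat) (g : nat -> R) : 'M[R]_(J + J) :=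
  \matrix_(i < J + J, j < J + J)
    if i == j :> nat then (2 * i + 1)%:R - (J + J)%:R
    else if j == i.+2 :> nat then g i.+1
    else if i == j.+2 :> nat then - g j.+1
    else 0.

Definition Amat (R : rcfType) (J : nat) (g : nat -> R) : 'M[R]_J :=
  \matrix_(i < J, j < J)
    if i == j :> nat then (4 * i + 1)%:R - (2 * J)%:R
    else if j == i.+1 :> nat then g (2 * i + 1)%N
    else if i == j.+1 :> nat then - g (2 * j + 1)%N
    else 0.

Definition Bmat (R : rcfType) (J : nat) (g : nat -> R) : 'M[R]_J :=
  \matrix_(i < J, j < J)
    if i == j :> nat then (4 * i + 3)%:R - (2 * J)%:R
    else if j == i.+1 :> nat then g (2 * i + 2)%N
    else if i == j.+1 :> nat then - g (2 * j + 2)%N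
    else 0.

(* row matrix whose rows are the standard basis vectors e_n, n odd (paper, 1-based),
   i.e. 0-based indices i = 2k *)
Definition Vodd (R : rcfType) (J : nat) : 'M[R]_(J, J + J) :=
  \matrix_(k < J, j < J + J) if j == (2 * k)%N :> nat then 1 else 0.
Definition Veven (R : rcfType) (J : nat) : 'M[R]_(J, J + J) :=
  \matrix_(k < J, j < J + J) if j == (2 * k + 1)%N :> nat then 1 else 0.

(* the choice of part (c): gamma_{2k-1} = gamma_{2k} = 2 sqrt(k(J-k)) *)
Definition gc (R : rcfType) (J : nat) (n : nat) : R :=
  let k := n.+1./2 in 2 * Num.sqrt ((k * (J - k))%:R).

Definition toCmx (R : rcfType) m n (A : 'M[R]_(m, n)) : 'M[complex R]_(m, n) :=
  map_mx (real_complex R) A.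

(* Main.v *)
Require Import Defs.
From HB Require Import structures.
From mathcomp Require Import all_boot all_order all_algebra.
From mathcomp Require Import fingroup perm complex.
From mathcomp Require Import zify ring lra.
Set Implicit Arguments. Unset Strict Implicit. Unset Printing Implicit Defensive.
Import Order.TTheory GRing.Theory Num.Theory.
Local Open Scope ring_scope.

Ltac dec_eqs := repeat match goal with
 | |- context [ @eq_op ?T ?x ?y ] =>
   first [ rewrite (_ : (x == y) = true); last by lia
         | rewrite (_ : (x == y) = false); last by lia
         | case: (@eqP T x y) => ?; try subst ]
 end.



Section Binid.
Variable R : rcfType.

Lemma binid (m p : nat) (x : R) :
  ((2 * p + 1)%:R - x) * 'C(m,p)%:R + p.+1%:R * 'C(m,p.+1)%:R
  - (if p is q.+1 then (x - p%:R) * 'C(m,q)%:R else 0)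
  = (m.+1%:R - x) * 'C(m.+1,p)%:R.
Proof.
have h1 : p.+1%:R * ('C(m,p)%:R + 'C(m,p.+1)%:R) = m.+1%:R * 'C(m,p)%:R :> R.
  rewrite -!natrD -!natrM; congr (_%:R).
  by rewrite (mul_bin_diag m.+1) binS addnC.
case: p h1 => [|q] h1.
  rewrite !bin0 bin1 subr0 ?natrM ?natrD. lra.
have h2 : q.+1%:R * ('C(m,q)%:R + 'C(m,q.+1)%:R) = m.+1%:R * 'C(m,q)%:R :> R.
  rewrite -!natrD -!natrM; congr (_%:R).
  by rewrite (mul_bin_diag m.+1) binS addnC.
rewrite (binS m q).
apply/eqP; rewrite -subr_eq0.
set X := 'C(m, q.+1)%:R in h1 h2 *.
set Y := 'C(m, q.+2)%:R in h1 *.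
set W := 'C(m, q)%:R in h2 *.
have -> : ((2 * q.+1 + 1)%:R - x) * X + q.+2%:R * Y - (x - q.+1%:R) * W -
  (m.+1%:R - x) * ('C(m, q.+1) + 'C(m, q))%:R =
  (q.+2%:R * (X + Y) - m.+1%:R * X) + (q.+1%:R * (W + X) - m.+1%:R * W) :> R.
  rewrite natrD -/X -/W ?natrD ?natrM. ring.
by rewrite h1 h2 !subrr addr0.
Qed.
End Binid.



Section TM.
Variables (R : rcfType) (M : nat).

Definition sq (k : nat) : R := Num.sqrt ((k * (M - k))%:R).
Definition dd (p : nat) : R := p`!%:R / \prod_(k < p) sq k.+1.

Lemma sq_gt0 k : (0 < k < M)%N -> 0 < sq k.
Proof. move=> h; rewrite /sq sqrtr_gt0 ltr0n muln_gt0; lia. Qed.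

Lemma sq_sqr k : (k <= M)%N -> sq k ^+ 2 = k%:R * (M%:R - k%:R).
Proof. by move=> h; rewrite /sq sqr_sqrtr ?ler0n // natrM natrB. Qed.

Lemma prod_sq_neq0 p : (p < M)%N -> \prod_(k < p) sq k.+1 != 0.
Proof.
move=> h; rewrite prodf_seq_neq0; apply/allP => k _ /=.
by rewrite gt_eqF // sq_gt0 //; have := ltn_ord k; lia.
Qed.

Lemma dd_neq0 p : (p < M)%N -> dd p != 0.
Proof.
move=> h; rewrite /dd mulf_neq0 ?invr_eq0 ?prod_sq_neq0 //.
by rewrite pnatr_eq0 -lt0n fact_gt0.
Qed.

Lemma dd_rec p : (p.+1 < M)%N -> sq p.+1 * dd p.+1 = p.+1%:R * dd p.
Proof.
move=> h; rewrite /dd big_ord_recr /= factS natrM.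
have h1 := prod_sq_neq0 (ltnW h).
have h2 : sq p.+1 != 0 by rewrite gt_eqF // sq_gt0 //; lia.
by field; apply/andP; split.
Qed.

Lemma dd_rec2 p : (p.+1 < M)%N -> sq p.+1 * dd p = (M%:R - p.+1%:R) * dd p.+1.
Proof.
move=> h.
have h2 : sq p.+1 != 0 by rewrite gt_eqF // sq_gt0 //; lia.
have hp : p.+1%:R != 0 :> R by rewrite pnatr_eq0.
have e : dd p = sq p.+1 * dd p.+1 / p.+1%:R.
  by rewrite dd_rec // mulrAC mulfV // mul1r.
rewrite e !mulrA -expr2 sq_sqr; last by lia.
by field; rewrite prod_sq_neq0 //= addrC natr1.
Qed.

Definition Qm : 'M[R]_M := \matrix_(p < M, m < M) (dd p * 'C(m, p)%:R).
Definition Sm : 'M[R]_M :=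
  \matrix_(i < M, j < M) if i == j.+1 :> nat then j.+1%:R - M%:R else 0.

Definition tf (p i : nat) : R :=
  if p == i then (2 * p + 1)%:R - M%:R
  else if i == p.+1 then sq p.+1
  else if p == i.+1 then - sq i.+1 else 0.

Lemma sum_ifeq n (b : bool) (k : nat) (c : R) :
  \sum_(i < n) (if b && ((i : nat) == k) then c else 0) = if b && (k < n)%N then c else 0.
Proof.
case: b => /=; last by rewrite big1.
case: ltnP => h.
  rewrite (bigD1 (Ordinal h)) //= eqxx big1 ?addr0 // => i /eqP ne.
  by case: eqP => // e; case: ne; apply: val_inj.
by rewrite big1 // => i _; case: eqP => // e; have := ltn_ord i; lia.
Qed.

Lemma ptwise p i m :
  tf p i * (dd i * 'C(m, i)%:R) =
  (if true && (i == p) then ((2 * p + 1)%:R - M%:R) * (dd p * 'C(m, p)%:R) else 0)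
  + (if true && (i == p.+1) then sq p.+1 * (dd p.+1 * 'C(m, p.+1)%:R) else 0)
  + (if (0 < p)%N && (i == (p - 1)%N) then - sq p * (dd (p - 1) * 'C(m, p - 1)%:R) else 0).
Proof.
rewrite /tf /=; dec_eqs; subst => /=; rewrite ?andbF ?addr0 ?add0r ?mul0r ?subn1 //=.
all: match goal with h : ?i = (?i - 1)%N |- _ => rewrite (_ : (0 < i)%N = false) ?addr0 //; lia end.
Qed.


Lemma key_eq p m : (p < M)%N -> (m < M)%N ->
  ((2 * p + 1)%:R - M%:R) * (dd p * 'C(m, p)%:R)
  + (if true && (p.+1 < M)%N then sq p.+1 * (dd p.+1 * 'C(m, p.+1)%:R) else 0)
  + (if (0 < p)%N && (p - 1 < M)%N then - sq p * (dd (p - 1) * 'C(m, p - 1)%:R) else 0)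
  = if true && (m.+1 < M)%N then dd p * 'C(m.+1, p)%:R * (m.+1%:R - M%:R) else 0.
Proof.
move=> hp hm /=.
have -> : (if (m.+1 < M)%N then dd p * 'C(m.+1, p)%:R * (m.+1%:R - M%:R) else 0)
   = dd p * 'C(m.+1, p)%:R * (m.+1%:R - M%:R).
  case: ltnP => // h; rewrite (_ : m.+1 = M); first by rewrite subrr mulr0.
  lia.
have -> : (if (p.+1 < M)%N then sq p.+1 * (dd p.+1 * 'C(m, p.+1)%:R) else 0)
   = dd p * (p.+1%:R * 'C(m, p.+1)%:R).
  case: ltnP => h; first by rewrite mulrA dd_rec //; ring.
  by rewrite bin_small ?mulr0 //; lia.
have := binid m p (M%:R : R).
case: p hp => [|q] hp /=.
  move=> e; rewrite -[RHS]mulrA (mulrC _ (_ - _)) -e; ring.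
rewrite subn1 /= (_ : (q < M)%N = true); last by lia.
rewrite mulNr (mulrA (sq q.+1)) dd_rec2 //.
move=> e; rewrite -[RHS]mulrA (mulrC _ (_ - _)) -e; ring.
Qed.

Lemma TQ_QS : Tmat R M *m Qm = Qm *m Sm.
Proof.
apply/matrixP => p m; rewrite !mxE.
rewrite (eq_bigr (fun i : 'I_M =>
  (if true && ((i:nat) == p) then ((2 * p + 1)%:R - M%:R) * (dd p * 'C(m, p)%:R) else 0)
  + (if true && ((i:nat) == p.+1) then sq p.+1 * (dd p.+1 * 'C(m, p.+1)%:R) else 0)
  + (if (0 < p)%N && ((i:nat) == (p - 1)%N) then - sq p * (dd (p - 1) * 'C(m, p - 1)%:R) else 0))); last first.
  by move=> i _; rewrite /Tmat /Qm !mxE; exact: ptwise.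
rewrite !big_split !sum_ifeq.
rewrite (eq_bigr (fun j : 'I_M => if true && ((j:nat) == m.+1) then
   dd p * 'C(m.+1, p)%:R * (m.+1%:R - M%:R) else 0)); last first.
  move=> j _; rewrite /Qm /Sm !mxE /=; case: eqP => [->|_]; last by rewrite mulr0.
  by [].
rewrite sum_ifeq (_ : (p < M)%N = true); last exact: ltn_ord.
exact: (key_eq (ltn_ord p) (ltn_ord m)).
Qed.

End TM.


Lemma char_poly_sim (F : fieldType) n (X Y Q : 'M[F]_n) :
  Q \in unitmx -> X *m Q = Q *m Y -> char_poly X = char_poly Y.
Proof.
move=> uQ e.
have E : char_poly_mx X *m map_mx polyC Q = map_mx polyC Q *m char_poly_mx Y.
  rewrite /char_poly_mx mulmxBl mulmxBr -!map_mxM e.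
  by rewrite mul_scalar_mx mul_mx_scalar.
move/(congr1 determinant): E; rewrite !det_mulmx det_map_mx mulrC.
apply: mulfI; rewrite polyC_eq0 -unitfE -unitmxE //.
Qed.

Lemma rank_sim (F : fieldType) n (X Y Q : 'M[F]_n) :
  Q \in unitmx -> X *m Q = Q *m Y -> \rank X = \rank Y.
Proof.
move=> uQ e.
rewrite -(mxrankMfree X (_ : row_free Q)) ?row_free_unit // e.
rewrite -mxrank_tr trmx_mul mxrankMfree ?mxrank_tr // row_free_unit unitmx_tr //.
Qed.

Section TM2.
Variables (R : rcfType) (M : nat).

Lemma Qm_unit : Qm R M \in unitmx.
Proof.
rewrite unitmxE unitfE -det_tr det_trig.
  rewrite prodf_seq_neq0; apply/allP => i _ /=.
  by rewrite !mxE binn mulr1 dd_neq0.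
apply/is_trig_mxP => i j h; rewrite !mxE bin_small ?mulr0 //.
Qed.

Lemma Sm_trig : is_trig_mx (Sm R M).
Proof.
apply/is_trig_mxP => i j h; rewrite !mxE; case: eqP => // e; lia.
Qed.

Lemma shift_sim (c a : R) :
  (c%:M + a *: Tmat R M) *m Qm R M = Qm R M *m (c%:M + a *: Sm R M).
Proof.
by rewrite mulmxDl mulmxDr -scalemxAl TQ_QS scalemxAr mul_scalar_mx mul_mx_scalar.
Qed.

Lemma char_poly_shift (c a : R) :
  char_poly (c%:M + a *: Tmat R M) = ('X - c%:P) ^+ M.
Proof.
rewrite (char_poly_sim Qm_unit (shift_sim c a)) char_poly_trig.
  rewrite (eq_bigr (fun _ => 'X - c%:P)) ?prodr_const ?card_ord //.
  move=> i _; rewrite !mxE eqxx; have -> : ((i:nat) == i.+1) = false by lia.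
  by rewrite mulr0 addr0 mulr1n.
apply/is_trig_mxP => i j h; rewrite !mxE.
have := Sm_trig; move/is_trig_mxP => /(_ i j h); rewrite !mxE => ->.
by rewrite (_ : (i == j) = false) ?mulr0 ?addr0 //; apply/negP => /eqP e; rewrite e ltnn in h.
Qed.

End TM2.

Section TM3.
Variables (R : rcfType) (n : nat).

Lemma kerS_rank : \rank (kermx (Sm R n.+1)) = 1%N.
Proof.
apply/eqP; rewrite eqn_leq; apply/andP; split.
  apply: (@leq_trans (\rank (delta_mx 0 0 : 'M[R]_(1, n.+1)))); last by rewrite mxrank_delta.
  apply: mxrankS.
  apply/row_subP => i.
  set v := row i (kermx (Sm R n.+1)).
  have hv : v *m Sm R n.+1 = 0 by apply/sub_kermxP; exact: row_sub.
  clearbody v.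
  have -> : v = v 0 0 *: delta_mx 0 0.
    apply/matrixP => x k; rewrite (ord1 x) !mxE.
    case: (eqVneq k 0) => [->|kn0]; first by rewrite eqxx mulr1.
    rewrite andbF mulr0.
    have k0 : (0 < k)%N by rewrite lt0n; apply: contra kn0 => /eqP e; apply/eqP/val_inj.
    pose j : 'I_n.+1 := inord (k - 1).
    have ej : j.+1 = k by rewrite /j inordK; have := ltn_ord k; lia.
    have := congr1 (fun A : 'M[R]_(1, n.+1) => A 0 j) hv; rewrite !mxE (bigD1 k) //= big1.
      rewrite addr0 !mxE ej eqxx => /eqP; rewrite mulf_eq0 => /orP[/eqP //|].
      by rewrite subr_eq0 eqr_nat => /eqP e; have := ltn_ord k; lia.
    move=> l lk; rewrite !mxE; case: eqP; last by rewrite mulr0.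
    by move=> e; case/eqP: lk; apply: val_inj; rewrite /= e ej.
  by apply: scalemx_sub; exact: submx_refl.
apply: (@leq_trans (\rank (delta_mx 0 0 : 'M[R]_(1, n.+1)))); first by rewrite mxrank_delta.
apply: mxrankS.
rewrite sub_kermx -rowE; apply/eqP/matrixP => i j; rewrite !mxE.
by case: eqP.
Qed.

Lemma kerT_rank (a : R) : a != 0 -> \rank (kermx (a *: Tmat R n.+1)) = 1%N.
Proof.
move=> a0; rewrite !mxrank_ker mxrank_scale_nz // (rank_sim (Qm_unit _ _) (TQ_QS _ _)).
by rewrite -mxrank_ker kerS_rank.
Qed.

End TM3.


Lemma coef_lead_XsubCn (F : comNzRingType) (a : F) k : (('X - a%:P) ^+ k)`_k = 1.
Proof.
have := monicP (monic_exp k (monicXsubC a)).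
by rewrite lead_coefE size_exp_XsubC.
Qed.

Lemma coef_XsubCn (F : comNzRingType) (a : F) n :
  (('X - a%:P) ^+ n.+1)`_n = - (n.+1%:R * a).
Proof.
elim: n => [|n IH]; first by rewrite expr1 coefB coefX coefC /= mul1r sub0r.
rewrite exprSr mulrBr coefB coefMX coefMC /= IH coef_lead_XsubCn.
by rewrite mul1r -opprD -(natr1 n.+1) mulrDl mul1r.
Qed.

Lemma prod_const_XsubC (F : comNzRingType) (rs : seq F) a :
  (forall z, z \in rs -> z = a) ->
  \prod_(z <- rs) ('X - z%:P) = ('X - a%:P) ^+ size rs.
Proof.
elim: rs => [|z rs IH] h; first by rewrite big_nil expr0.
have hz : z = a by apply: h; rewrite mem_head.
have hrs : forall w, w \in rs -> w = a.
  by move=> w hw; apply: h; rewrite in_cons hw orbT.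
by rewrite big_cons (IH hrs) hz /= exprS.
Qed.

Lemma eig_tr (F : closedFieldType) n (X : 'M[F]_n) (a : F) :
  (forall a b : F, eigenvalue X a -> eigenvalue X b -> a = b) ->
  eigenvalue X a -> \tr X = n%:R * a.
Proof.
move=> hall ha.
have [rs hrs] := closed_field_poly_normal (char_poly X).
rewrite (monicP (char_poly_monic X)) scale1r in hrs.
have allr : forall z, z \in rs -> z = a.
  move=> z zr; apply: hall => //; rewrite eigenvalue_root_char hrs.
  by rewrite root_prod_XsubC.
rewrite (prod_const_XsubC allr) in hrs.
have sz : size rs = n.
  have := size_char_poly X; rewrite hrs size_exp_XsubC; by case.
case: n X ha hall hrs sz => [|n] X ha hall hrs sz.
  by rewrite mul0r /mxtrace big_ord0.
apply: oppr_inj; rewrite -char_poly_trace // hrs sz /=.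
by rewrite coef_XsubCn.
Qed.

Lemma eig_block (F : fieldType) n1 n2 (X P : 'M[F]_(n1 + n2)) (A : 'M[F]_n1) (B : 'M[F]_n2) (a : F) :
  P *m P^T = 1%:M -> P^T *m P = 1%:M ->
  P *m X *m P^T = block_mx A 0 0 B ->
  (eigenvalue A a \/ eigenvalue B a) -> eigenvalue X a.
Proof.
move=> PPt PtP e hab.
have PX : P *m X = block_mx A 0 0 B *m P by rewrite -e -mulmxA PtP mulmx1.
have key : forall u : 'rV_(n1 + n2), u != 0 -> u *m block_mx A 0 0 B = a *: u ->
   eigenvalue X a.
  move=> u u0 hu; apply/eigenvalueP; exists (u *m P).
    by rewrite -mulmxA PX mulmxA hu scalemxAl.
  apply: contra u0 => /eqP h; apply/eqP.
  by rewrite -[u]mulmx1 -PPt mulmxA h mul0mx.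
case: hab => /eigenvalueP [v hv v0].
  apply: (key (row_mx v 0)).
    by apply: contra v0; rewrite row_mx_eq0 => /andP[].
  by rewrite mul_row_block !mulmx0 !mul0mx addr0 add0r hv scale_row_mx scaler0.
apply: (key (row_mx 0 v)).
  by apply: contra v0; rewrite row_mx_eq0 => /andP[].
by rewrite mul_row_block !mulmx0 !mul0mx addr0 add0r hv scale_row_mx scaler0.
Qed.



Section PartA.
Variables (R : rcfType) (J : nat) (g : nat -> R).

Definition sfv (i : nat) : nat := if (i < J)%N then (2 * i)%N else (2 * (i - J) + 1)%N.
Lemma sfv_lt (i : 'I_(J + J)) : (sfv i < J + J)%N.
Proof. rewrite /sfv; case: (ltnP i J) => h /=; have := ltn_ord i; lia. Qed.
Definition sf (i : 'I_(J + J)) : 'I_(J + J) := Ordinal (sfv_lt i).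
Lemma sf_inj : injective sf.
Proof.
move=> i j /(congr1 val) /=; rewrite /sfv => e; apply: val_inj => /=.
move: e; case: (ltnP i J) => h1; case: (ltnP j J) => h2 /=; lia.
Qed.
Definition sp : 'S_(J + J) := perm sf_inj.

Definition hf (i j : nat) : R :=
    if i == j then (2 * i + 1)%:R - (J + J)%:R
    else if j == i.+2 then g i.+1
    else if i == j.+2 then - g j.+1
    else 0.
Definition af (i j : nat) : R :=
    if i == j then (4 * i + 1)%:R - (2 * J)%:R
    else if j == i.+1 then g (2 * i + 1)%N
    else if i == j.+1 then - g (2 * j + 1)%N
    else 0.
Definition bf (i j : nat) : R :=
    if i == j then (4 * i + 3)%:R - (2 * J)%:R
    else if j == i.+1 then g (2 * i + 2)%N
    else if i == j.+1 then - g (2 * j + 2)%N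
    else 0.

Lemma hf_ee a b : hf (2 * a) (2 * b) = af a b.
Proof.
rewrite /hf /af; dec_eqs => //.
- by congr (_%:R - _%:R); lia.
- by rewrite addn1.
- by rewrite addn1.
Qed.


Lemma hf_oo a b : hf (2 * a + 1) (2 * b + 1) = bf a b.
Proof.
rewrite /hf /bf; dec_eqs => //.
- by congr (_%:R - _%:R); lia.
- by congr (g _); lia.
- by congr (- g _); lia.
Qed.

Lemma hf_eo a b : hf (2 * a) (2 * b + 1) = 0.
Proof. by rewrite /hf; dec_eqs. Qed.

Lemma hf_oe a b : hf (2 * a + 1) (2 * b) = 0.
Proof. by rewrite /hf; dec_eqs. Qed.

Lemma conj_perm (X : 'M[R]_(J + J)) :
  perm_mx sp *m X *m (perm_mx sp)^T = \matrix_(i, j) X (sf i) (sf j).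
Proof.
rewrite -row_permE tr_perm_mx -col_permE; apply/matrixP => i j.
by rewrite !mxE !permE.
Qed.

Lemma blockH : perm_mx sp *m Hmat J g *m (perm_mx sp)^T = block_mx (Amat J g) 0 0 (Bmat J g).
Proof.
rewrite conj_perm; apply/matrixP => i j.
rewrite -(splitK i) -(splitK j).
case: (split i) => a; case: (split j) => b /=;
  rewrite ?block_mxEul ?block_mxEur ?block_mxEdl ?block_mxEdr !mxE /= /sfv /=.
- by rewrite !ltn_ord; exact: hf_ee.
- rewrite ltn_ord (_ : (J + b < J)%N = false); last by lia.
  by rewrite addKn; exact: hf_eo.
- rewrite ltn_ord (_ : (J + a < J)%N = false); last by lia.
  by rewrite addKn; exact: hf_oe.
- rewrite (_ : (J + b < J)%N = false); last by lia.
  rewrite (_ : (J + a < J)%N = false); last by lia.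
  by rewrite !addKn; exact: hf_oo.
Qed.


Lemma Vodd_usub : Vodd R J = usubmx (perm_mx sp).
Proof.
apply/matrixP => k j; rewrite !mxE permE.
have -> : (sf (lshift J k) == j) = (j == (2 * k)%N :> nat).
  by rewrite -val_eqE /= /sfv ltn_ord eq_sym.
by case: (_ == _).
Qed.

Lemma Veven_dsub : Veven R J = dsubmx (perm_mx sp).
Proof.
apply/matrixP => k j; rewrite !mxE permE.
have -> : (sf (rshift J k) == j) = (j == (2 * k + 1)%N :> nat).
  rewrite -val_eqE /= /sfv (_ : (J + k < J)%N = false) ?addKn 1?eq_sym //; lia.
by case: (_ == _).
Qed.

Lemma PtP : (perm_mx sp)^T *m perm_mx sp = 1%:M :> 'M[R]_(J + J).
Proof. by rewrite tr_perm_mx -perm_mxM mulVg perm_mx1. Qed.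

Lemma PPt : perm_mx sp *m (perm_mx sp)^T = 1%:M :> 'M[R]_(J + J).
Proof. by rewrite tr_perm_mx -perm_mxM mulgV perm_mx1. Qed.

Lemma PHt : perm_mx sp *m (Hmat J g)^T =
  (block_mx (Amat J g) 0 0 (Bmat J g))^T *m perm_mx sp.
Proof. by rewrite -blockH !trmx_mul trmxK -!mulmxA PtP mulmx1. Qed.

Lemma stable_odd : stablemx (Vodd R J) (Hmat J g)^T.
Proof.
rewrite Vodd_usub mul_usub_mx PHt tr_block_mx !trmx0 block_mxEv mul_col_mx col_mxKu.
by rewrite -{1}(vsubmxK (perm_mx sp)) mul_row_col mul0mx addr0 submxMl.
Qed.

Lemma stable_even : stablemx (Veven R J) (Hmat J g)^T.
Proof.
rewrite Veven_dsub mul_dsub_mx PHt tr_block_mx !trmx0 block_mxEv mul_col_mx col_mxKd.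
by rewrite -{1}(vsubmxK (perm_mx sp)) mul_row_col mul0mx add0r submxMl.
Qed.

End PartA.



Section Tr.
Variable R : rcfType.

Lemma sum41 k : \sum_(i < k) ((4 * i + 1)%:R : R) = k%:R * (2 * k%:R - 1).
Proof.
elim: k => [|k IH]; first by rewrite big_ord0 mul0r.
rewrite big_ord_recr /= IH ?natrD ?natrM -?natr1; ring.
Qed.

Lemma sum43 k : \sum_(i < k) ((4 * i + 3)%:R : R) = k%:R * (2 * k%:R + 1).
Proof.
elim: k => [|k IH]; first by rewrite big_ord0 mul0r.
rewrite big_ord_recr /= IH ?natrD ?natrM -?natr1; ring.
Qed.

Lemma trA J (g : nat -> R) : \tr (Amat J g) = - J%:R.
Proof.
rewrite /mxtrace (eq_bigr (fun i : 'I_J => (4 * i + 1)%:R - (2 * J)%:R)); last first.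
  by move=> i _; rewrite mxE eqxx.
rewrite sumrB sum41 sumr_const card_ord -mulr_natr ?natrM; ring.
Qed.

Lemma trB J (g : nat -> R) : \tr (Bmat J g) = J%:R.
Proof.
rewrite /mxtrace (eq_bigr (fun i : 'I_J => (4 * i + 3)%:R - (2 * J)%:R)); last first.
  by move=> i _; rewrite mxE eqxx.
rewrite sumrB sum43 sumr_const card_ord -mulr_natr ?natrM; ring.
Qed.

End Tr.

Section PartB.
Variables (R : rcfType) (J : nat) (g : nat -> R).
Hypothesis hJ : (0 < J)%N.

Lemma natC_neq0 : (J%:R : complex R) != 0.
Proof. by rewrite pnatr_eq0 -lt0n. Qed.

Lemma partbA : (forall a b : complex R, eigenvalue (toCmx (Amat J g)) a ->
     eigenvalue (toCmx (Amat J g)) b -> a = b) ->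
  forall a : complex R, eigenvalue (toCmx (Amat J g)) a -> a = - 1.
Proof.
move=> hall a ha; have := eig_tr hall ha.
rewrite /toCmx trace_map_mx trA rmorphN rmorph_nat => e.
apply: (mulfI natC_neq0); by rewrite mulrN1 -e.
Qed.

Lemma partbB : (forall a b : complex R, eigenvalue (toCmx (Bmat J g)) a ->
     eigenvalue (toCmx (Bmat J g)) b -> a = b) ->
  forall a : complex R, eigenvalue (toCmx (Bmat J g)) a -> a = 1.
Proof.
move=> hall a ha; have := eig_tr hall ha.
rewrite /toCmx trace_map_mx trB rmorph_nat => e.
apply: (mulfI natC_neq0); by rewrite mulr1 -e.
Qed.

Lemma blockC : perm_mx (sp J) *m toCmx (Hmat J g) *m (perm_mx (sp J))^T =
   block_mx (toCmx (Amat J g)) 0 0 (toCmx (Bmat J g)).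
Proof.
have := congr1 (map_mx (real_complex R)) (blockH J g).
by rewrite !map_mxM -map_trmx map_perm_mx map_block_mx !map_mx0.
Qed.

Lemma exists_eig n (X : 'M[complex R]_n) : (0 < n)%N -> exists a, eigenvalue X a.
Proof.
move=> n0; have : size (char_poly X) != 1%N by rewrite size_char_poly; case: n X n0.
by case/closed_rootP => a ha; exists a; rewrite eigenvalue_root_char.
Qed.

Lemma partb3 : forall eta : complex R,
  char_poly (toCmx (Hmat J g)) != ('X - eta%:P) ^+ (J + J).
Proof.
move=> eta; apply/negP => /eqP hc.
have eigH : forall x, eigenvalue (toCmx (Hmat J g)) x -> x = eta.
  move=> x; rewrite eigenvalue_root_char hc rootE horner_exp hornerXsubC.
  by rewrite expf_eq0 subr_eq0 => /andP[_ /eqP].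
have PPt' : perm_mx (sp J) *m (perm_mx (sp J))^T = 1%:M :> 'M[complex R]_(J + J).
  by rewrite tr_perm_mx -perm_mxM mulgV perm_mx1.
have PtP' : (perm_mx (sp J))^T *m perm_mx (sp J) = 1%:M :> 'M[complex R]_(J + J).
  by rewrite tr_perm_mx -perm_mxM mulVg perm_mx1.
have eA : forall x, eigenvalue (toCmx (Amat J g)) x -> x = eta.
  move=> x hx; apply: eigH; apply: (eig_block PPt' PtP' blockC); by left.
have eB : forall x, eigenvalue (toCmx (Bmat J g)) x -> x = eta.
  move=> x hx; apply: eigH; apply: (eig_block PPt' PtP' blockC); by right.
have [a ha] := exists_eig (toCmx (Amat J g)) hJ.
have [b hb] := exists_eig (toCmx (Bmat J g)) hJ.
have a1 := partbA (fun x y hx hy => etrans (eA x hx) (esym (eA y hy))) ha.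
have b1 := partbB (fun x y hx hy => etrans (eB x hx) (esym (eB y hy))) hb.
have : (-1 : complex R) = 1 by rewrite -a1 -b1 (eA a ha) (eB b hb).
move/eqP; rewrite -subr_eq0 -opprD oppr_eq0 (_ : 1 + 1 = 2%:R :> complex R) // pnatr_eq0.
by [].
Qed.

End PartB.



Lemma half1 i : (2 * i + 1).+1./2 = i.+1.
Proof. rewrite -divn2; lia. Qed.
Lemma half2 i : (2 * i + 2).+1./2 = i.+1.
Proof. rewrite -divn2; lia. Qed.

Section PartC.
Variables (R : rcfType) (J : nat).

Lemma gc_sym n : (1 <= n <= J + J - 2)%N -> gc R J n = gc R J (J + J - 1 - n)%N.
Proof.
move=> h; rewrite /gc /= !uphalfE.
have e : (J + J - 1 - n).+1./2 = (J - n.+1./2)%N by rewrite -!divn2; lia.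
rewrite e; have le : (n.+1./2 <= J)%N by rewrite -divn2; lia.
by rewrite subKn // mulnC.
Qed.

Lemma Agc : Amat J (gc R J) = - 1%:M + 2 *: Tmat R J.
Proof.
apply/matrixP => -[i hi] [j hj]; rewrite !mxE /= /gc /= -val_eqE /= !uphalfE.
rewrite half1 half1.
dec_eqs; rewrite ?mulr0n ?mulr1n ?oppr0 ?add0r ?mulr0 //.
  by rewrite ?natrD ?natrM; ring.
by rewrite mulrN.
Qed.

Lemma Bgc : Bmat J (gc R J) = 1%:M + 2 *: Tmat R J.
Proof.
apply/matrixP => -[i hi] [j hj]; rewrite !mxE /= /gc /= -val_eqE /= !uphalfE.
rewrite half2 half2.
dec_eqs; rewrite ?mulr0n ?mulr1n ?oppr0 ?add0r ?mulr0 //.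
  by rewrite ?natrD ?natrM; ring.
by rewrite mulrN.
Qed.

End PartC.


Lemma scalar_mxN1 (R : rcfType) n : (-1)%:M = - 1%:M :> 'M[R]_n.
Proof. by apply/matrixP => i j; rewrite !mxE mulNrn. Qed.

Unset Implicit Arguments.
Set Strict Implicit.

Theorem lemma1 (R : rcfType) (J : nat) (hJ : (0 < J)%N) :
  (forall g : nat -> R,
     (forall n : nat, (1 <= n <= J + J - 2)%N -> g n = g (J + J - 1 - n)%N) ->
     let H := Hmat J g in
     let A := Amat J g in
     let B := Bmat J g in
     (* (a) *)
     (stablemx (Vodd R J) H^T /\ stablemx (Veven R J) H^T /\
      exists s : 'S_(J + J),
        perm_mx s *m H *m (perm_mx s)^T = block_mx A 0 0 B) /\
     (* (b) *)
     ((forall a b : (complex R), eigenvalue (toCmx A) a -> eigenvalue (toCmx A) b -> a = b) ->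
        forall a : (complex R), eigenvalue (toCmx A) a -> a = - 1) /\
     ((forall a b : (complex R), eigenvalue (toCmx B) a -> eigenvalue (toCmx B) b -> a = b) ->
        forall a : (complex R), eigenvalue (toCmx B) a -> a = 1) /\
     (forall eta : (complex R), char_poly (toCmx H) != ('X - eta%:P) ^+ (J + J))) /\
  (* (c) *)
  ((forall n : nat, (1 <= n <= J + J - 2)%N -> gc R J n = gc R J (J + J - 1 - n)%N) /\
   Amat J (gc R J) = - 1%:M + 2 *: Tmat R J /\
   Bmat J (gc R J) = 1%:M + 2 *: Tmat R J /\
   char_poly (Amat J (gc R J)) = ('X + 1) ^+ J /\
   char_poly (Bmat J (gc R J)) = ('X - 1) ^+ J /\
   \rank (eigenspace (Amat J (gc R J)) (-1)) = 1%N /\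
   \rank (eigenspace (Bmat J (gc R J)) 1) = 1%N).
Proof.
split.
  move=> g _ H A B.
  split; first split; [exact: stable_odd | split; [exact: stable_even | by exists (sp J); exact: blockH]|].
  split; first exact: (@partbA R J g hJ).
  split; first exact: (@partbB R J g hJ).
  exact: (@partb3 R J g hJ).
split; first exact: gc_sym.
split; first exact: Agc.
split; first exact: Bgc.
case: J hJ => // n _.
have h2 : (2 : R) != 0 by rewrite pnatr_eq0.
split.
  by rewrite Agc -scalar_mxN1 char_poly_shift polyCN opprK polyC1.
split.
  by rewrite Bgc char_poly_shift polyC1.
split.
  rewrite /eigenspace Agc scalar_mxN1 opprK addrAC addNr add0r.
  exact: kerT_rank.
rewrite /eigenspace Bgc addrAC subrr add0r.
exact: kerT_rank.
Qed.
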